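(* Let $R$ be a finite principal left ideal ring, $<$ a respectful order on $R$, $B$ an ordered basis of $R^n$, and $P$ a left multiplicative property on $R^n$ with $P[0]$ false. Then each code $C_i$ produced by the greedy algorithm is a free left $R$-module, and the vectors $a_j$ ($j\le i$) selected by the algorithm up to step $i$ form a basis of $C_i$.
   Context: $R^\ast$ is the unit group of $R$. A property $P:R^n\to\{\text{true},\text{false}\}$ is left multiplicative if $P[ux]=P[x]$ for all $u\in R^\ast$, $x\in R^n$. A total order $<$ on $R$ is respectful if for all nonzero $x,y\in R$ with $Rx\supsetneq Ry$ there is $\alpha\in R^\ast$ with $\alpha x<uy$ for all $u\in R^\ast$. Fix an ordered basis $B=(b_1,\dots,b_n)$ of the free left module $R^n$; put $V_0=\{0\}$ and $V_i=Rb_1+\dots+Rb_i$. The lexicographic order on $R^n$: if $x\in V_{i-1}$ and $y\in V_i\setminus V_{i-1}$ then $x<y$; if $x\ne y$ both lie in $V_i\setminus V_{i-1}$, write $x=\sum_{j\le i}x_jb_j$, $y=\sum_{j\le i}y_jb_j$, let $k$ be the largest index with $x_k\ne y_k$, and set $x<y$ iff $x_k<y_k$ in $R$. Fix a set $\Gamma\subseteq R$ containing one generator of each nonzero left ideal of $R$. Greedy algorithm: $C_0=\{0\}$; for $i=1,\dots,n$, let $a_i$ be the smallest vector of $V_i\setminus V_{i-1}$ (if any) such that $P[\gamma a_i+c]$ is true for all $\gamma\in\Gamma$ and all $c\in C_{i-1}$; if such $a_i$ exists (''is selected'') set $C_i=Ra_i+C_{i-1}$, otherwise $C_i=C_{i-1}$.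 The lexicode is $C(<,B,P):=C_n$. *)

(* Defs.v *)
From HB Require Import structures.
From mathcomp Require Import all_boot all_order all_algebra.
Set Implicit Arguments. Unset Strict Implicit. Unset Printing Implicit Defensive.
Import Order.TTheory GRing.Theory.
Local Open Scope ring_scope.

Section Lexicodes.
Variable R : finUnitRingType.

Definition lid (x : R) : {set R} := [set r * x | r : R].

Definition left_ideal (I : {set R}) : Prop :=
  0 \in I /\ (forall x y, x \in I -> y \in I -> x + y \in I)
  /\ (forall r x, x \in I -> r * x \in I).

Definition principal_left_ideal_ring : Prop :=
  forall I, left_ideal I -> exists g : R, I = lid g.

Definition strict_total_order (lt : rel R) : Prop :=
  (forall x, ~~ lt x x) /\ (forall x y z, lt x y -> lt y z -> lt x z)
  /\ (forall x y, x != y -> lt x y || lt y x).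

Definition respectful (lt : rel R) : Prop :=
  forall x y : R, x != 0 -> y != 0 -> lid y \proper lid x ->
    exists2 a : R, a \is a GRing.unit &
      forall u : R, u \is a GRing.unit -> lt (a * x) (u * y).

Definition generator_set (Gamma : {set R}) : Prop :=
  (forall g, g \in Gamma -> g != 0) /\
  (forall I, left_ideal I -> I != [set 0] ->
     exists g, [/\ g \in Gamma, lid g = I &
                   forall g', g' \in Gamma -> lid g' = I -> g' = g]).

Variable n : nat.
Notation vec := 'rV[R]_n.

Definition left_multiplicative (P : vec -> bool) : Prop :=
  forall (u : R) (x : vec), u \is a GRing.unit -> P (u *: x) = P x.

Definition lcomb (S : pred 'I_n) (v : 'I_n -> vec) (c : 'I_n -> R) : vec :=
  \sum_(j | S j) c j *: v j.

(* The family (v j)_{j in S} is a basis of the set M (which is then a free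
   left R-module): it spans M and is left linearly independent. *)
Definition is_basis_of (M : {set vec}) (S : pred 'I_n) (v : 'I_n -> vec) : Prop :=
  (forall x, x \in M <-> exists c : 'I_n -> R, x = lcomb S v c) /\
  (forall c : 'I_n -> R, lcomb S v c = 0 -> forall j, S j -> c j = 0).

Variable b : 'I_n -> vec.

(* V_i = R b_1 + ... + R b_i  (paper indices 1..i, here 0-based j < i). *)
Definition inV (i : nat) (x : vec) : bool :=
  [exists c : {ffun 'I_n -> R}, x == \sum_(j < n | (j < i)%N) c j *: b j].

Definition lexlt (lt : rel R) (x y : vec) : Prop :=
  (exists i : nat, [/\ (1 <= i <= n)%N, inV i.-1 x, inV i y & ~~ inV i.-1 y])
  \/
  (exists i : nat, [/\ (1 <= i <= n)%N, inV i x && ~~ inV i.-1 x,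
      inV i y && ~~ inV i.-1 y, x != y &
      exists cx cy : 'I_n -> R,
        [/\ x = \sum_(j < n | (j < i)%N) cx j *: b j,
            y = \sum_(j < n | (j < i)%N) cy j *: b j &
            exists k : 'I_n, [/\ (k < i)%N, cx k != cy k,
               (forall j : 'I_n, (k < j < i)%N -> cx j = cy j) & lt (cx k) (cy k)]]]).

Definition addline (a : vec) (C : {set vec}) : {set vec} :=
  [set x | [exists r : R, [exists c in C, x == r *: a + c]]].

(* Specification of a run of the greedy algorithm: a i is the vector selected
   at (paper) step i+1 (None if none is selected), C i is the code C_i. *)
Definition greedy_run (lt : rel R) (P : vec -> bool) (Gamma : {set R})
    (a : 'I_n -> option vec) (C : nat -> {set vec}) : Prop :=
  C 0%N = [set 0] /\
  forall i : 'I_n,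
    let cand v := [&& inV i.+1 v, ~~ inV i v &
                     [forall g in Gamma, [forall c in C i, P (g *: v + c)]]] in
    match a i with
    | Some v => [/\ cand v, (forall w, cand w -> w != v -> lexlt lt v w)
                  & C i.+1 = addline v (C i)]
    | None => (forall w, ~~ cand w) /\ C i.+1 = C i
    end.

End Lexicodes.

(* Main.v *)
Require Import Defs.
From HB Require Import structures.
From mathcomp Require Import all_boot all_order all_algebra.
Import GRing.Theory.
Local Open Scope ring_scope.

Section H.
Variables (R : finUnitRingType) (n : nat).

Lemma lcombD (S : pred 'I_n) v (c d : 'I_n -> R) :
  lcomb S v c + lcomb S v d = lcomb S v (fun j => c j + d j).
Proof. rewrite /lcomb -big_split; apply: eq_bigr => j _; by rewrite scalerDl. Qed.

Lemma lcombZ (S : pred 'I_n) v (c : 'I_n -> R) r :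
  r *: lcomb S v c = lcomb S v (fun j => r * c j).
Proof. rewrite /lcomb scaler_sumr; apply: eq_bigr => j _; by rewrite scalerA. Qed.

Lemma lcomb0 (S : pred 'I_n) (v : 'I_n -> 'rV[R]_n) :
  lcomb S v (fun _ => 0) = 0.
Proof. rewrite /lcomb big1 // => j _; by rewrite scale0r. Qed.

Lemma lcomb_step (a : 'I_n -> option 'rV[R]_n) (i : 'I_n) (c : 'I_n -> R) :
 lcomb (fun j : 'I_n => (j < i.+1)%N && (a j != None)) (fun j => odflt 0 (a j)) c =
 (if a i is Some v then c i *: v else 0) +
   lcomb (fun j : 'I_n => (j < i)%N && (a j != None)) (fun j => odflt 0 (a j)) c.
Proof.
rewrite /lcomb; case E: (a i) => [v|].
  rewrite (bigD1 i) /=; last by rewrite ltnSn E.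
  rewrite E; congr (_ + _); apply: eq_bigl => j.
  rewrite ltnS leq_eqVlt; case: (eqVneq j i) => [->|ne]; first by rewrite ltnn /= andbF.
  have : (j : nat) != i by apply: contra ne => h; apply/eqP; apply: val_inj; exact/eqP.
  by move=> /negbTE ->; rewrite andbT.
rewrite add0r; apply: eq_bigl => j.
rewrite ltnS leq_eqVlt; case: (eqVneq j i) => [->|ne]; first by rewrite E !andbF.
have : (j : nat) != i by apply: contra ne => h; apply/eqP; apply: val_inj; exact/eqP.
by move=> /negbTE ->.
Qed.

Lemma lcomb_ext (S : pred 'I_n) v (c d : 'I_n -> R) :
  (forall j, S j -> c j = d j) -> lcomb S v c = lcomb S v d.
Proof. by move=> h; apply: eq_bigr => j /h ->. Qed.

End H.

Theorem mainTheorem9 (R : finUnitRingType) (lt : rel R) (n : nat)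
    (b : 'I_n -> 'rV[R]_n) (P : 'rV[R]_n -> bool) (Gamma : {set R})
    (a : 'I_n -> option 'rV[R]_n) (C : nat -> {set 'rV[R]_n}) :
  principal_left_ideal_ring R ->
  strict_total_order lt -> respectful lt ->
  is_basis_of [set: 'rV[R]_n] predT b ->
  left_multiplicative P -> P 0 = false ->
  generator_set Gamma ->
  greedy_run b lt P Gamma a C ->
  forall i : nat, (i <= n)%N ->
    is_basis_of (C i) (fun j : 'I_n => (j < i)%N && (a j != None))
                (fun j => odflt 0 (a j)).
Proof.
move=> _ _ _ _ _ P0 [_ HG] [C0 Hstep] i.
set v := fun j => odflt 0 (a j).
elim: i => [|i IH] Hi.
  split.
    move=> x; rewrite C0 in_set1; split.
      by move/eqP->; exists (fun _ => 0); rewrite lcomb0.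
    case=> c ->; apply/eqP; rewrite /lcomb big1 // => j; by rewrite ltn0.
  by move=> c _ j; rewrite ltn0.
have Hi' : (i < n)%N by [].
case: (IH (ltnW Hi)) => IHm IHi.
set io := Ordinal Hi'.
have Hs := Hstep io; simpl in Hs.
have memD : forall x y, x \in C i -> y \in C i -> x + y \in C i.
  move=> x y /IHm [c ->] /IHm [d ->]; apply/IHm; exists (fun j => c j + d j).
  by rewrite lcombD.
have memZ : forall r x, x \in C i -> r *: x \in C i.
  move=> r x /IHm [c ->]; apply/IHm; exists (fun j => r * c j); by rewrite lcombZ.
have mem0 : 0 \in C i by apply/IHm; exists (fun _ => 0); rewrite lcomb0.
have step := @lcomb_step R n a io.
rewrite /= in step.
case E: (a io) Hs step => [w|] Hs step.
  case: Hs => Hc _ HC.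
  split.
    move=> x; rewrite HC /addline inE; split.
      case/existsP => r /existsP [c0 /andP [/IHm [d ->] /eqP ->]].
      exists (fun j => if j == io then r else d j).
      rewrite step eqxx; congr (_ + _); apply: lcomb_ext => j /andP [hj _].
      have : j != io by apply/negP => /eqP hh; rewrite hh /= ltnn in hj.
      by move/negbTE ->.
    case=> c ->; apply/existsP; exists (c io); apply/existsP.
    exists (lcomb (fun j : 'I_n => (j < i)%N && (a j != None)) v c).
    by rewrite step eqxx andbT; apply/IHm; exists c.
  move=> c; rewrite step => H0.
  have ci0 : c io = 0.
    apply/eqP/negP => nz.
    pose I := [set r | r *: w \in C i].
    have Ilid : left_ideal I.
      split; first by rewrite inE scale0r.
      split; first by move=> x y; rewrite !inE scalerDl; apply: memD.
      by move=> r x; rewrite !inE -scalerA; apply: memZ.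
    have cI : c io \in I.
      rewrite inE; have -> : c io *: w = - lcomb (fun j : 'I_n => (j < i)%N && (a j != None)) v c.
        by apply/eqP; rewrite -addr_eq0 H0.
      by rewrite -scaleN1r; apply: memZ; apply/IHm; exists c.
    have In0 : I != [set 0].
      by apply/negP => /eqP h; move: cI; rewrite h in_set1.
    case: (HG I Ilid In0) => g [gG lg _].
    have gI : g \in I by rewrite -lg; apply/imsetP; exists 1 => //; rewrite mul1r.
    move: gI; rewrite inE => gI.
    move: Hc => /and3P [_ _ /forallP /(_ g) /implyP /(_ gG) /forallP /(_ (- (g *: w)))].
    rewrite -scaleN1r memZ // scaleN1r subrr P0 //.
  move: H0; rewrite ci0 scale0r add0r => H0 j /andP [hj aj].
  move: hj; rewrite ltnS leq_eqVlt => /orP [/eqP hj|hj].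
    by have -> : j = io by apply: val_inj.
  by apply: IHi => //; rewrite hj.
case: Hs => _ HC.
have {}step : forall c, lcomb (fun j : 'I_n => (j < i.+1)%N && (a j != None)) v c = lcomb (fun j : 'I_n => (j < i)%N && (a j != None)) v c by move=> c; rewrite step add0r.
have Seq : forall j : 'I_n, ((j < i.+1)%N && (a j != None)) = ((j < i)%N && (a j != None)).
  move=> j; rewrite ltnS leq_eqVlt; case: (eqVneq (j : nat) i) => [h|h] //=.
  have -> : j = io by apply: val_inj.
  by rewrite E ltnn.
split.
  move=> x; rewrite HC; split; first by move/IHm=> [c ->]; exists c; rewrite step.
  by case=> c ->; apply/IHm; exists c; rewrite step.
move=> c; rewrite step => H0 j; rewrite Seq; exact: IHi.
Qed.
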